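(* Let $q\ge 2$ and $n\ge 1$ be integers, $N=\{1,\dots,n\}$, $F^c=\{-\tfrac{q-1}{2},-\tfrac{q-3}{2},\dots,\tfrac{q-3}{2},\tfrac{q-1}{2}\}$ and $\Omega=(F^c)^N$. For each subset $A\subset N$ with $|A|\ge 2$ let $J_A\ge 0$ be given, and define $H_\gamma=-\sum_{A}J_A\,\delta_{(\sigma^A)_\gamma}$, where for $A=\{i_1,\dots,i_k\}$, $\delta_{(\sigma^A)_\gamma}=1$ if $(\sigma_{i_1})_\gamma=\dots=(\sigma_{i_k})_\gamma$ and $0$ otherwise. Let $Z_\gamma=\exp(-H_\gamma)$, $Z=\sum_{\gamma\in\Omega}Z_\gamma$, $P(\gamma)=Z_\gamma/Z$, and $\langle X\rangle=\sum_\gamma X(\gamma)P(\gamma)$. For a finite list $R$ of elements of $N$ (repetitions allowed) set $\sigma^R=\prod_{i\in R}\sigma_i$ (product with multiplicity, $\sigma^\emptyset\equiv 1$), where $\sigma_i(\gamma)=(\sigma_i)_\gamma$ is the $i$-th coordinate of $\gamma$. Then for any two such lists $R$ and $S$, $$\langle\sigma^R\sigma^S\rangle-\langle\sigma^R\rangle\langle\sigma^S\rangle\ge 0.$$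
   Context: This is a generalized ferromagnetic $q$-state Potts model with multi-spin interactions, with spin values taken in the centered set $F^c$ (equivalently, $\sigma_i$ is the Potts spin in $\{1,\dots,q\}$ minus $(q+1)/2$); the inverse temperature is set to $1$. The paper formally also permits $J_A=+\infty$. *)

(* Defs.v *)
From HB Require Import structures.
From mathcomp Require Import all_boot all_order all_algebra.
From mathcomp Require Import all_classical all_reals all_analysis.
Set Implicit Arguments. Unset Strict Implicit. Unset Printing Implicit Defensive.
Import Order.TTheory GRing.Theory Num.Theory.
Local Open Scope ring_scope.

Section Potts.
Variables (R : realType) (q n : nat).

Definition config := {ffun 'I_n -> 'I_q}.

(* centered spin value: k - (q-1)/2, ranging over F^c *)
Definition spin (k : 'I_q) : R := k%:R - (q%:R - 1) / 2.

Definition sigma (i : 'I_n) (g : config) : R := spin (g i).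

Definition delta (A : {set 'I_n}) (g : config) : R :=
  if [forall i in A, forall j in A, sigma i g == sigma j g] then 1 else 0.

Variable J : {set 'I_n} -> R.

Definition Ham (g : config) : R :=
  - \sum_(A : {set 'I_n} | (1 < #|A|)%N) J A * delta A g.

Definition Zg (g : config) : R := expR (- Ham g).
Definition Zpart : R := \sum_(g : config) Zg g.
Definition Prob (g : config) : R := Zg g / Zpart.
Definition expect (X : config -> R) : R := \sum_(g : config) X g * Prob g.

Definition sigmaL (s : seq 'I_n) (g : config) : R := \prod_(i <- s) sigma i g.

End Potts.

(* Main.v *)
Require Import Defs.
From HB Require Import structures.
From mathcomp Require Import all_boot all_order all_algebra.
From mathcomp Require Import ring lra.
Set Implicit Arguments. Unset Strict Implicit. Unset Printing Implicit Defensive.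
Import Order.TTheory GRing.Theory Num.Theory.
Local Open Scope ring_scope.



Section FKG.
Variables (R : realFieldType) (T : finType).

Lemma split_powerset (E : {set T}) e (F : {set T} -> R) : e \in E ->
  \sum_(B in powerset E) F B =
  \sum_(B in powerset (E :\ e)) F B + \sum_(B in powerset (E :\ e)) F (e |: B).
Proof.
move=> eE; rewrite (bigID (fun B : {set T} => e \in B)) /= addrC; congr (_ + _).
  apply: eq_bigl => B; rewrite !powersetE subsetD1; case: (e \in B); by rewrite ?andbF ?andbT.

rewrite (@reindex_onto _ _ _ {set T} {set T} (fun B : {set T} => e |: B) (fun B : {set T} => B :\ e)) /=.
  apply: eq_bigl => B; rewrite !powersetE setU11 andbT.
  apply/idP/idP.
    case/andP=> sB /eqP <-.
    by rewrite subsetD1 setD11 andbT (subset_trans (subsetDl _ _) sB).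
  rewrite subsetD1 => /andP [sB eB]; rewrite setU1K // eqxx andbT.
  by rewrite subUset sub1set eE (subset_trans sB) // subsetDl.
by move=> B /andP [] _ eB; rewrite setD1K.
Qed.

Lemma sum_pos (E : {set T}) (rho : {set T} -> R) :
  (forall B : {set T}, B \subset E -> 0 < rho B) -> 0 < \sum_(B in powerset E) rho B.
Proof.
move=> rp; rewrite (bigD1 set0) ?powersetE ?sub0set //=.
apply: ltr_wpDr; last by apply: rp; apply: sub0set.
by apply: sumr_ge0 => B /andP []; rewrite powersetE => sB _; apply/ltW/rp.
Qed.

Definition incr (E : {set T}) (f : {set T} -> R) :=
  forall B B' : {set T}, B \subset B' -> B' \subset E -> f B <= f B'.

Lemma fkg_aux (a0 a1 F0 F1 G0 G1 H0 H1 : R) :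
  0 < a0 -> 0 < a1 -> F0 * G0 <= H0 * a0 -> F1 * G1 <= H1 * a1 ->
  F0 * a1 <= F1 * a0 -> G0 * a1 <= G1 * a0 ->
  (F0 + F1) * (G0 + G1) <= (H0 + H1) * (a0 + a1).
Proof.
move=> a0p a1p h0 h1 hf hg.
set x0 := F0 / a0; set x1 := F1 / a1; set y0 := G0 / a0; set y1 := G1 / a1.
have eF0 : F0 = x0 * a0 by rewrite /x0 divfK // gt_eqF.
have eF1 : F1 = x1 * a1 by rewrite /x1 divfK // gt_eqF.
have eG0 : G0 = y0 * a0 by rewrite /y0 divfK // gt_eqF.
have eG1 : G1 = y1 * a1 by rewrite /y1 divfK // gt_eqF.
move: h0 h1 hf hg; rewrite eF0 eF1 eG0 eG1 => h0 h1 hf hg.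
have hx : x0 <= x1.
  by rewrite -(ler_pM2r (mulr_gt0 a0p a1p)); nra.
have hy : y0 <= y1.
  by rewrite -(ler_pM2r (mulr_gt0 a0p a1p)); nra.
have h0' : x0 * y0 * a0 <= H0.
  by rewrite -(ler_pM2r a0p); nra.
have h1' : x1 * y1 * a1 <= H1.
  by rewrite -(ler_pM2r a1p); nra.
nra.
Qed.

Lemma fkg (E : {set T}) (rho f g : {set T} -> R) :
  (forall B : {set T}, B \subset E -> 0 < rho B) ->
  (forall e (B B' : {set T}), e \in E -> B \subset B' -> B' \subset E :\ e ->
     rho (e |: B) * rho B' <= rho (e |: B') * rho B) ->
  incr E f -> incr E g ->
  (\sum_(B in powerset E) rho B * f B) * (\sum_(B in powerset E) rho B * g B) <=
  (\sum_(B in powerset E) rho B * (f B * g B)) * (\sum_(B in powerset E) rho B).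
Proof.
have [n] := ubnP #|E|; elim: n E rho f g => // n IH E rho f g.
case: (set_0Vmem E) => [-> _ | [e eE] ltE] rpos rrat fi gi.
  rewrite powerset0 !big_set1 le_eqVlt; apply/orP; left; apply/eqP; ring.
set E' := E :\ e.
have ltE' : (#|E'| < n)%N by move: ltE; rewrite /E' (cardsD1 e E) eE.
have sE' : forall B : {set T}, B \subset E' -> B \subset E.
  by move=> B sB; apply: subset_trans sB (subsetDl _ _).
have eE'B : forall B : {set T}, B \subset E' -> e |: B \subset E.
  by move=> B sB; rewrite subUset sub1set eE sE'.
have eNB : forall B : {set T}, B \subset E' -> e \notin B.
  by move=> B /subsetP sB; apply/negP => /sB; rewrite !inE eqxx.
have rpos0 : forall B : {set T}, B \subset E' -> 0 < rho B by move=> B /sE'; apply: rpos.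
have rpos1 : forall B : {set T}, B \subset E' -> 0 < rho (e |: B) by move=> B /eE'B; apply: rpos.
have rrat0 : forall e' (B B' : {set T}), e' \in E' -> B \subset B' -> B' \subset E' :\ e' ->
     rho (e' |: B) * rho B' <= rho (e' |: B') * rho B.
  move=> e' B B' eE' sBB sB'; apply: rrat => //; first by apply: (subsetP (subsetDl E [set e])).
  by apply: subset_trans sB' _; apply: setSD; apply: subsetDl.
have rrat1 : forall e' (B B' : {set T}), e' \in E' -> B \subset B' -> B' \subset E' :\ e' ->
     rho (e |: (e' |: B)) * rho (e |: B') <= rho (e |: (e' |: B')) * rho (e |: B).
  move=> e' B B' eE' sBB sB'.
  have -> : e |: (e' |: B) = e' |: (e |: B) by rewrite setUA [e |: _]setUC setUA.
  have -> : e |: (e' |: B') = e' |: (e |: B') by rewrite setUA [e |: _]setUC setUA.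
  apply: rrat; first by apply: (subsetP (subsetDl E [set e])).
    by apply: setUS.
  rewrite subUset sub1set; apply/andP; split.
  by rewrite !inE eE andbT; move: eE'; rewrite !inE => /andP [ne _]; rewrite eq_sym.
  by apply: subset_trans sB' _; apply: setSD; apply: subsetDl.
have fi0 : incr E' f by move=> B B' sBB sB; apply: fi => //; apply: sE'.
have gi0 : incr E' g by move=> B B' sBB sB; apply: gi => //; apply: sE'.
have fi1 : incr E' (fun B => f (e |: B)).
  by move=> B B' sBB sB; apply: fi; [apply: setUS | apply: eE'B].
have gi1 : incr E' (fun B => g (e |: B)).
  by move=> B B' sBB sB; apply: gi; [apply: setUS | apply: eE'B].
have IH0 := IH E' rho f g ltE' rpos0 rrat0 fi0 gi0.
have IH1 := IH E' (fun B => rho (e |: B)) _ _ ltE' rpos1 rrat1 fi1 gi1.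
set h := fun B => rho (e |: B) / rho B.
have hi : incr E' h.
  move=> B B' sBB sB'; rewrite /h ler_pdivrMr ?rpos0 //; last by apply: subset_trans sB'.
  rewrite mulrAC ler_pdivlMr ?rpos0 //.
  apply: rrat => //; rewrite /E' setDDl setUid //.
have monof : forall (k : {set T} -> R), incr E k ->
   (\sum_(B in powerset E') rho B * k B) * (\sum_(B in powerset E') rho (e |: B)) <=
   (\sum_(B in powerset E') rho (e |: B) * k (e |: B)) * (\sum_(B in powerset E') rho B).
  move=> k ki.
  have k0 : incr E' k by move=> B B' sBB sB; apply: ki => //; apply: sE'.
  have := IH E' rho k h ltE' rpos0 rrat0 k0 hi.
  have eh : forall B : {set T}, B \in powerset E' -> rho B * h B = rho (e |: B).
    by move=> B; rewrite powersetE => sB; rewrite /h mulrC divfK // gt_eqF // rpos0.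
  rewrite (eq_bigr _ eh) => H; apply: le_trans H _.
  apply: ler_wpM2r; first by apply/ltW/sum_pos.
  apply: ler_sum => B; rewrite powersetE => sB.
  rewrite mulrCA eh ?powersetE // mulrC ler_pM2l ?rpos1 //.
  by apply: ki; [apply: subsetUr | apply: eE'B].
rewrite !(split_powerset _ eE) -/E'.
by apply: fkg_aux => //; try apply: sum_pos => //; apply: monof.
Qed.
End FKG.



Section Mom.
Variables (R : realFieldType) (q n : nat).

Definition mom (u : 'I_q -> R) (k : nat) : R := (\sum_(c : 'I_q) u c ^+ k) / q%:R.
Definition Mom (u : 'I_q -> R) (L : seq 'I_n) : R := \prod_(j : 'I_n) mom u (count_mem j L).

Lemma prod_count (F : 'I_n -> R) (L : seq 'I_n) :
  \prod_(i <- L) F i = \prod_(j : 'I_n) F j ^+ count_mem j L.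
Proof.
elim: L => [|x L IH]; first by rewrite big_nil big1 // => j _; rewrite expr0.
rewrite big_cons IH /=.
under [RHS]eq_bigr do rewrite exprD.
rewrite big_split /=; congr (_ * _).
rewrite (bigD1 x) //= eqxx expr1 big1 ?mulr1 // => j /negbTE nj.
by rewrite eq_sym nj expr0.
Qed.

Lemma sum_prod_list (u : 'I_q -> R) (L : seq 'I_n) : (0 < q)%N ->
  \sum_(g : {ffun 'I_n -> 'I_q}) \prod_(i <- L) u (g i) = q%:R ^+ n * Mom u L.
Proof.
move=> q0.
under eq_bigr do rewrite prod_count.
rewrite -(bigA_distr_bigA (fun j c => u c ^+ count_mem j L)) /=.
have -> : (q%:R : R) ^+ n = \prod_(j : 'I_n) (q%:R : R) by rewrite prodr_const card_ord.
rewrite /Mom /mom -big_split /=.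
apply: eq_bigr => j _; rewrite mulrC divfK //.
by rewrite pnatr_eq0 -lt0n.
Qed.

Lemma count_sum (P : pred 'I_n) (L : seq 'I_n) :
  count P L = (\sum_(i | P i) count_mem i L)%N.
Proof.
elim: L => [|x L IH]; first by rewrite big1.
rewrite /= IH big_split /=; congr (_ + _)%N.
rewrite (big_mkcond P) (bigD1 x) //= big1 ?addn0.
  by case: (P x); rewrite ?eqxx.
by move=> j /negbTE nj; rewrite eq_sym nj if_same.
Qed.

Variable u : 'I_q -> R.
Hypothesis mpos : forall k, 0 <= mom u k.
Hypothesis msup : forall a b, mom u a * mom u b <= mom u (a + b).
Hypothesis m0 : mom u 0 = 1.

Lemma Mom_ge0 L : 0 <= Mom u L.
Proof. by apply: prodr_ge0. Qed.

Lemma Mom_cat L1 L2 : Mom u L1 * Mom u L2 <= Mom u (L1 ++ L2).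
Proof.
rewrite /Mom -big_split /=; apply: ler_prod => j _.
by rewrite count_cat mulr_ge0 ?msup.
Qed.

Lemma Mom_map (f : 'I_n -> 'I_n) L : Mom u L <= Mom u (map f L).
Proof.
rewrite /Mom (partition_big f xpredT) //=.
apply: ler_prod => j _; rewrite count_map count_sum.
elim/big_rec2: _ => [|i y1 y2 _ /andP [y1p y1le]].
  by rewrite m0 ler01 lexx.
rewrite mulr_ge0 //=; apply: le_trans (msup _ _).
by rewrite ler_wpM2l.
Qed.

End Mom.

Lemma cheb (R : realFieldType) (I : finType) (X Y : I -> R) :
  (forall c d, 0 <= (X c - X d) * (Y c - Y d)) ->
  (\sum_c X c) * (\sum_c Y c) <= #|I|%:R * \sum_c (X c * Y c).
Proof.
move=> H.
have : 0 <= \sum_c \sum_d (X c - X d) * (Y c - Y d).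
  by apply: sumr_ge0 => c _; apply: sumr_ge0 => d _.
have E : forall c, \sum_d (X c - X d) * (Y c - Y d) =
   (X c * Y c) * #|I|%:R + \sum_d (X d * Y d) - (X c * \sum_d Y d + Y c * \sum_d X d).
  move=> c; transitivity (\sum_d ((X c * Y c) + X d * Y d - (X c * Y d + Y c * X d))).
    by apply: eq_bigr => d _; ring.
  rewrite sumrB !big_split /= sumr_const -!mulr_sumr mulr_natr.
  reflexivity.
under eq_bigr do rewrite E.
rewrite sumrB big_split /= sumr_const big_split /= -!mulr_suml -mulr_natr.
rewrite -[X in _ *+ X]/(#|I|) -mulr_natr !mul1r.
move: (\sum_i X i * Y i) (\sum_i X i) (\sum_i Y i) => a b c h.
lra.
Qed.


From mathcomp Require Import all_classical all_reals all_analysis.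
Import Order.TTheory GRing.Theory Num.Theory.
Local Open Scope ring_scope.



Section Spin.
Variables (R : realType) (q : nat).
Hypothesis q0 : (0 < q)%N.

Lemma qR0 : (q%:R : R) != 0.
Proof. by rewrite pnatr_eq0 -lt0n. Qed.

Lemma mom0 (u : 'I_q -> R) : mom u 0 = 1.
Proof.
rewrite /mom; under eq_bigr do rewrite expr0.
by rewrite sumr_const card_ord -mulr_natl mulr1 divff // qR0.
Qed.

Lemma spin_rev (k : 'I_q) : spin R (rev_ord k) = - spin R k.
Proof.
rewrite /spin /= natrB ?ltn_ord // -addn1 natrD.
have h2 := splitr (q%:R - 1 : R).
lra.
Qed.

Lemma sum_odd k : odd k -> \sum_(c : 'I_q) spin R c ^+ k = 0.
Proof.
move=> ok.
have : \sum_(c : 'I_q) spin R c ^+ k = - \sum_(c : 'I_q) spin R c ^+ k.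
  rewrite {1}(reindex_inj rev_ord_inj) /= -sumrN; apply: eq_bigr => c _.
  by rewrite spin_rev exprNn -signr_odd ok expr1 mulN1r.
move=> h; lra.
Qed.

Lemma mom_spin_ge0 k : 0 <= mom (@spin R q) k.
Proof.
rewrite /mom; case ok: (odd k); first by rewrite sum_odd // mul0r.
apply: divr_ge0; last by apply: ler0n.
by apply: sumr_ge0 => c _; apply: exprn_even_ge0; rewrite ok.
Qed.

Lemma even_mono (x y : R) a b : ~~ odd a -> ~~ odd b ->
  0 <= (x ^+ a - y ^+ a) * (x ^+ b - y ^+ b).
Proof.
move=> ea eb.
have [a' ->] : exists a', a = (2 * a')%N by exists a./2; rewrite -{1}(odd_double_half a) (negbTE ea) add0n mul2n.
have [b' ->] : exists b', b = (2 * b')%N by exists b./2; rewrite -{1}(odd_double_half b) (negbTE eb) add0n mul2n.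
rewrite !exprM.
have t0 : 0 <= x ^+ 2 by apply: sqr_ge0.
have s0 : 0 <= y ^+ 2 by apply: sqr_ge0.
case: (leP (x ^+ 2) (y ^+ 2)) => h.
  apply: mulr_le0; rewrite subr_le0 lerXn2r // ?ltW //.
apply: mulr_ge0; rewrite subr_ge0 lerXn2r // ltW //.
Qed.

Lemma mom_spin_sup a b : mom (@spin R q) a * mom (@spin R q) b <= mom (@spin R q) (a + b).
Proof.
case oa: (odd a); first by rewrite {1}/mom sum_odd // !mul0r mom_spin_ge0.
case ob: (odd b); first by rewrite {2}/mom sum_odd // mul0r mulr0 mom_spin_ge0.
rewrite /mom mulrACA -invfM ler_pdivrMr; last by rewrite mulr_gt0 // ltr0n.
rewrite mulrA divfK ?qR0 //.
under [X in _ <= X * _]eq_bigr do rewrite exprD.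
have := @cheb R _ (fun c : 'I_q => spin R c ^+ a) (fun c => spin R c ^+ b).
rewrite card_ord => h; rewrite [X in _ <= X]mulrC; apply: h => c d; apply: even_mono; by rewrite ?oa ?ob.
Qed.

Definition ind (c : 'I_q) (d : 'I_q) : R := (d == c)%:R.

Lemma mom_ind c k : mom (ind c) k = if k == 0%N then 1 else q%:R^-1.
Proof.
case: eqP => [->|/eqP k0]; first by apply: mom0.
rewrite /mom /ind (bigD1 c) //= eqxx expr1n big1 ?addr0 ?mul1r //.
by move=> d /negbTE ->; rewrite expr0n (negbTE k0).
Qed.

Lemma mom_ind_ge0 c k : 0 <= mom (ind c) k.
Proof. by rewrite mom_ind; case: eqP => _ //; rewrite invr_ge0 ler0n. Qed.

Lemma mom_ind_sup c a b : mom (ind c) a * mom (ind c) b <= mom (ind c) (a + b).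
Proof.
rewrite !mom_ind addn_eq0; case: eqP => _; rewrite ?mul1r //=.
case: eqP => _; rewrite ?mulr1 //=.
have h1 : 1 <= (q%:R : R) by rewrite ler1n.
rewrite ger_pMl ?invr_gt0 ?ltr0n // invf_le1 //.
by apply: lt_le_trans h1.
Qed.

End Spin.



Section Root.
Variables (R : realType) (q n : nat).
Implicit Types (B : {set {set 'I_n}}) (g : config q n).

Definition rB B : rel 'I_n := fun i j => [exists A in B, (i \in A) && (j \in A)].

Lemma rB_sym B : connect_sym (rB B).
Proof.
apply: sym_connect_sym => i j; apply/existsP/existsP => [] [A /andP [AB /andP [h1 h2]]];
  by exists A; rewrite AB h1 h2.
Qed.

Definition rt B i := fingraph.root (rB B) i.

Lemma rt_rt B i : rt B (rt B i) = rt B i.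
Proof. by rewrite /rt root_root //; apply: rB_sym. Qed.

Lemma rt_edge B A i j : A \in B -> i \in A -> j \in A -> rt B i = rt B j.
Proof.
move=> AB iA jA; apply/eqP; rewrite /rt root_connect; last by apply: rB_sym.
by apply: connect1; apply/existsP; exists A; rewrite AB iA jA.
Qed.

Lemma rt_mono B B' i : B \subset B' -> rt B' (rt B i) = rt B' i.
Proof.
move=> sB; apply/eqP; rewrite /rt root_connect; last by apply: rB_sym.
rewrite (rB_sym B') /=.
apply: (connect_sub (e := rB B)); last by apply: connect_root.
move=> x y /existsP [A /andP [AB xy]]; apply: connect1; apply/existsP; exists A.
by rewrite (fintype.subsetP sB) .
Qed.

Definition constg (A : {set 'I_n}) g := [forall i in A, forall j in A, g i == g j].

Lemma rt_const B g : (forall A, A \in B -> constg A g) -> forall i, g (rt B i) = g i.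
Proof.
move=> H i.
have cl : fingraph.closed (rB B) [pred z | g z == g i].
  move=> x y /existsP [A /andP [AB /andP [xA yA]]] /=.
  have := H A AB; rewrite /constg => /forall_inP /(_ x xA) /forall_inP /(_ y yA) /eqP E.
  by rewrite !inE E.
have := closed_connect cl (connect_root (rB B) i); rewrite !inE eqxx => /esym/eqP.
by [].
Qed.

Definition Psi B g : config q n := [ffun i => g (rt B i)].

Lemma PsiK B g : Psi B (Psi B g) = Psi B g.
Proof. by apply/ffunP => i; rewrite !ffunE rt_rt. Qed.

Lemma Psi_fix B g : (Psi B g == g) = [forall A in B, constg A g].
Proof.
apply/eqP/forall_inP => [H A AB | H].
  apply/forall_inP => i iA; apply/forall_inP => j jA.
  by rewrite -H !ffunE (rt_edge AB iA jA).
by apply/ffunP => i; rewrite ffunE rt_const.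
Qed.

Lemma spin_inj : injective (@spin R q).
Proof.
move=> a b; rewrite /spin => /eqP; rewrite -subr_eq0 opprB addrA subrK subr_eq0 eqr_nat.
by move=> /eqP /val_inj.
Qed.

Lemma deltaE A g : delta R A g = (constg A g)%:R.
Proof.
have e : [forall i in A, forall j in A, sigma R i g == sigma R j g] = constg A g.
  apply: eq_forallb => i; congr (_ ==> _); apply: eq_forallb => j; congr (_ ==> _).
  rewrite /sigma; apply/eqP/eqP; last by move=> ->.
  by apply: spin_inj.
by rewrite /delta e; case: (constg A g).
Qed.

Definition DeltaB B g : R := \prod_(A in B) delta R A g.

Lemma DeltaBE B g : DeltaB B g = (Psi B g == g)%:R.
Proof.
rewrite Psi_fix /DeltaB; case: forall_inP => [H | /forall_inP].
  by rewrite big1 // => A AB; rewrite deltaE H.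
rewrite negb_forall_in => /exists_inP [A AB nA].
by rewrite (bigD1 A) //= deltaE (negbTE nA) mul0r.
Qed.

Lemma DeltaB_ge0 B g : 0 <= DeltaB B g.
Proof. by rewrite DeltaBE ler0n. Qed.

Definition fib B g' := [set g | Psi B g == g'].

Lemma fib_le B g1 g2 : Psi B g1 = g1 -> Psi B g2 = g2 -> (#|fib B g1| <= #|fib B g2|)%N.
Proof.
move=> f1 f2.
pose tau g : config q n := [ffun i => if rt B i == i then g2 i else g i].
have <- : #|tau @: fib B g1| = #|fib B g1|.
  apply: card_in_imset => ga gb; rewrite !inE => /eqP ea /eqP eb eab.
  apply/ffunP => i; have := congr1 (fun h : config q n => h i) eab; rewrite !ffunE.
  case: eqP => [ei _|//].
  have := congr1 (fun h : config q n => h i) ea; have := congr1 (fun h : config q n => h i) eb.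
  by rewrite !ffunE ei => -> ->.
apply: subset_leq_card; apply/fintype.subsetP => g /imsetP [g0 _ ->]; rewrite inE.
apply/eqP/ffunP => i; rewrite !ffunE rt_rt eqxx -f2 ffunE.
by rewrite ffunE rt_rt.
Qed.

End Root.



Section Sums.
Variables (R : realType) (q n : nat).
Hypothesis q0 : (0 < q)%N.
Implicit Types (B : {set {set 'I_n}}) (g : config q n).

Lemma sum_Psi B (X : config q n -> R) :
  \sum_(g : config q n) X (Psi B g) = \sum_(g' : config q n) X g' * #|fib B g'|%:R.
Proof.
rewrite (partition_big (Psi B) xpredT) //=; apply: eq_bigr => g' _.
rewrite (eq_bigr (fun _ => X g')); last by move=> g /eqP ->.
rewrite sumr_const [RHS]mulr_natr; congr (_ *+ _).
rewrite /fib cardsE; apply: eq_card => g.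
by [].
Qed.

Lemma fib_card B (gr g' : config q n) : Psi B gr = gr ->
  #|fib B g'| = ((Psi B g' == g') * #|fib B gr|)%N.
Proof.
move=> fr; case: eqP => [fg|nfg].
  by rewrite mul1n; apply/eqP; rewrite eqn_leq !fib_le.
rewrite mul0n; apply/eqP; rewrite cards_eq0; apply/eqP/setP => g; rewrite !inE.
apply/negbTE/eqP => eg; apply: nfg; by rewrite -eg PsiK.
Qed.

Lemma sum_Psi2 B (gr : config q n) (X : config q n -> R) : Psi B gr = gr ->
  \sum_(g : config q n) X (Psi B g) = #|fib B gr|%:R * \sum_(g : config q n) DeltaB R B g * X g.
Proof.
move=> fr; rewrite sum_Psi mulr_sumr; apply: eq_bigr => g' _.
by rewrite (fib_card _ fr) natrM DeltaBE; ring.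
Qed.

Definition Ncfg : R := #|{: config q n}|%:R.

Lemma SB_eq B (X : config q n -> R) :
  (\sum_(g : config q n) DeltaB R B g * X g) * Ncfg = (\sum_(g : config q n) DeltaB R B g) * \sum_(g : config q n) X (Psi B g).
Proof.
pose g0 : config q n := [ffun=> Ordinal q0].
have fr := PsiK B g0.
have h1 := sum_Psi2 X fr.
have h2 := sum_Psi2 (fun _ => 1) fr.
have eN : \sum_(g : config q n) (1 : R) = Ncfg by rewrite sumr_const /Ncfg -mulr_natl mulr1.
rewrite eN in h2; rewrite h2 h1.
have e1 : \sum_(g : config q n) DeltaB R B g * 1 = \sum_(g : config q n) DeltaB R B g by apply: eq_bigr => g _; rewrite mulr1.
rewrite e1.
ring.
Qed.

Lemma Ncfg_eq : Ncfg = (q%:R : R) ^+ n.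
Proof. by rewrite /Ncfg card_ffun !card_ord natrX. Qed.

Lemma Ncfg_neq0 : Ncfg != 0.
Proof. by rewrite Ncfg_eq expf_neq0 // pnatr_eq0 -lt0n. Qed.

Definition ZB B : R := \sum_(g : config q n) DeltaB R B g.

Lemma SB_sigma B (L : seq 'I_n) :
  \sum_(g : config q n) DeltaB R B g * sigmaL R L g = ZB B * Mom (@spin R q) (map (rt B) L).
Proof.
apply: (mulIf Ncfg_neq0); rewrite SB_eq /ZB -mulrA; congr (_ * _).
have e : forall g : config q n, sigmaL R L (Psi B g) = \prod_(i <- map (rt B) L) spin R (g i).
  by move=> g; rewrite /sigmaL big_map; apply: eq_bigr => i _; rewrite /sigma ffunE.
under eq_bigr do rewrite e.
by rewrite (sum_prod_list (fun c => spin R c)) // Ncfg_eq mulrC.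
Qed.

Lemma prod_ind (s : seq 'I_n) (c : 'I_q) (g : config q n) :
  \prod_(i <- s) ind R c (g i) = (all (fun i => g i == c) s)%:R.
Proof.
elim: s => [|x s IH]; first by rewrite big_nil.
by rewrite big_cons IH /= /ind -natrM mulnb.
Qed.

Lemma delta_sum (e : {set 'I_n}) (g : config q n) : (0 < #|e|)%N ->
  delta R e g = \sum_(c : 'I_q) \prod_(i <- enum e) ind R c (g i).
Proof.
rewrite card_gt0 => /set0Pn [i0 i0e].
under eq_bigr do rewrite prod_ind.
have E : forall c, all (fun i => g i == c) (enum e) = constg e g && (g i0 == c).
  move=> c; apply/idP/idP.
    move=> /allP H; have Hc : forall i, i \in e -> g i = c.
      by move=> i ie; apply/eqP; apply: H; rewrite mem_enum.
    rewrite (Hc i0 i0e) eqxx andbT; apply/forall_inP => i ie; apply/forall_inP => j je.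
    by rewrite (Hc i ie) (Hc j je).
  case/andP => /forall_inP H /eqP <-; apply/allP => i; rewrite mem_enum => ie.
  by have /forall_inP := H i ie; apply.
under eq_bigr do rewrite E.
rewrite deltaE; case: (constg e g) => /=.
  by rewrite (bigD1 (g i0)) //= eqxx big1 ?addr0 // => c /negbTE; rewrite eq_sym => ->.
by rewrite big1.
Qed.

Lemma SB_delta B (e : {set 'I_n}) : (0 < #|e|)%N ->
  \sum_(g : config q n) DeltaB R B g * delta R e g =
  ZB B * \sum_(c : 'I_q) Mom (ind R c) (map (rt B) (enum e)).
Proof.
move=> e0; apply: (mulIf Ncfg_neq0); rewrite SB_eq /ZB -mulrA; congr (_ * _).
have E : forall g : config q n, delta R e (Psi B g) =
   \sum_(c : 'I_q) \prod_(i <- map (rt B) (enum e)) ind R c (g i).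
  move=> g; rewrite delta_sum //; apply: eq_bigr => c _.
  by rewrite big_map; apply: eq_bigr => i _; rewrite ffunE.
under eq_bigr do rewrite E.
rewrite exchange_big mulr_suml; apply: eq_bigr => c _.
by rewrite (sum_prod_list (ind R c)) // Ncfg_eq mulrC.
Qed.

End Sums.



Section Final.
Variables (R : realType) (q n : nat) (J : {set 'I_n} -> R).
Hypothesis q0 : (0 < q)%N.
Implicit Types (B : {set {set 'I_n}}) (A : {set 'I_n}).
Hypothesis hJ : forall A : {set 'I_n}, (1 < #|A|)%N -> 0 <= J A.

Definition pA (A : {set 'I_n}) : R := if (1 < #|A|)%N then expR (J A) - 1 else 0.
Definition EE : {set {set 'I_n}} := [set A : {set 'I_n} | (1 < #|A|)%N && (0 < J A)].
Definition cB (B : {set {set 'I_n}}) : R := \prod_(A in B) pA A.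

Lemma pA_pos A : A \in EE -> 0 < pA A.
Proof.
by rewrite inE /pA => /andP [-> hJA]; rewrite subr_gt0 expR_gt1.
Qed.

Lemma cB_pos B : B \subset EE -> 0 < cB B.
Proof.
move=> sB; apply: prodr_gt0 => A AB; apply: pA_pos; exact: (fintype.subsetP sB).
Qed.

Lemma cB0 B : ~~ (B \subset EE) -> cB B = 0.
Proof.
case/fintype.subsetPn => A AB nAE.
rewrite /cB (bigD1 A) //= [pA A](_ : _ = 0) ?mul0r //.
move: nAE; rewrite inE /pA; case: ifP => //= h1 nJ.
have -> : J A = 0 by apply/eqP; rewrite eq_le hJ // andbT leNgt nJ.
by rewrite expR0 subrr.
Qed.

Lemma Zg_exp (g : config q n) :
  Zg J g = \sum_(B in powerset EE) cB B * DeltaB R B g.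
Proof.
rewrite /Zg /Ham opprK expR_sum.
have e1 : forall A : {set 'I_n}, (1 < #|A|)%N -> expR (J A * delta R A g) = pA A * delta R A g + 1.
  move=> A h; rewrite /pA h deltaE; case: (constg A g) => /=.
    by rewrite !mulr1 subrK.
  by rewrite !mulr0 expR0 add0r.
rewrite (eq_bigr _ e1) big_mkcond /=.
rewrite (eq_bigr (fun A => pA A * delta R A g + 1)); last first.
  by move=> A _; case: ifP => // h; rewrite /pA h mul0r add0r.
rewrite bigA_distr /=.
rewrite (bigID (fun B => B \in powerset EE)) /= [X in _ + X]big1 ?addr0; last first.
  move=> B; rewrite powersetE => nB.
  rewrite -big_mkcond /= big_split /= -/(cB B) cB0 ?mul0r //.
apply: eq_bigr => B _.
by rewrite -big_mkcond /= big_split.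
Qed.

Definition rho B : R := cB B * ZB R q B.
Definition phi (L : seq 'I_n) B : R := Mom (@spin R q) (map (rt B) L).

Lemma sum_Zg_sigma L :
  \sum_(g : config q n) Zg J g * sigmaL R L g = \sum_(B in powerset EE) rho B * phi L B.
Proof.
under eq_bigr do rewrite Zg_exp mulr_suml.
rewrite exchange_big /=; apply: eq_bigr => B _.
rewrite /rho /phi -mulrA.
rewrite -(@SB_sigma R q n q0) mulr_sumr; apply: eq_bigr => g _; ring.
Qed.

Lemma Zpart_eq : Zpart q J = \sum_(B in powerset EE) rho B.
Proof.
rewrite /Zpart; under eq_bigr do rewrite Zg_exp.
rewrite exchange_big /=; apply: eq_bigr => B _.
by rewrite /rho /ZB mulr_sumr.
Qed.

Lemma ZB_pos B : 0 < ZB R q B.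
Proof.
pose g0 : config q n := Psi B [ffun=> Ordinal q0].
rewrite /ZB (bigD1 g0) //= DeltaBE /g0 PsiK eqxx /=.
apply: ltr_wpDr; last by apply: ltr01.
by apply: sumr_ge0 => g _; apply: DeltaB_ge0.
Qed.

Lemma rho_pos B : B \subset EE -> 0 < rho B.
Proof. by move=> sB; rewrite /rho mulr_gt0 ?cB_pos ?ZB_pos. Qed.

Definition dB B (e : {set 'I_n}) : R := \sum_(c : 'I_q) Mom (ind R c) (map (rt B) (enum e)).

Lemma ZB_setU1 B e : e \notin B -> (0 < #|e|)%N -> ZB R q (e |: B) = ZB R q B * dB B e.
Proof.
move=> eB e0; rewrite /ZB -(@SB_delta R q n q0 B e e0).
by apply: eq_bigr => g _; rewrite /DeltaB big_setU1 //= mulrC.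
Qed.

Lemma cB_setU1 B e : e \notin B -> cB (e |: B) = pA e * cB B.
Proof. by move=> eB; rewrite /cB big_setU1. Qed.

Lemma map_rt_mono B B' (L : seq 'I_n) : B \subset B' ->
  map (rt B') L = map (rt B') (map (rt B) L).
Proof. by move=> sB; rewrite -map_comp; apply: eq_map => i /=; rewrite rt_mono. Qed.

Lemma dB_mono B B' e : B \subset B' -> dB B e <= dB B' e.
Proof.
move=> sB; apply: ler_sum => c _; rewrite (map_rt_mono _ sB).
apply: Mom_map.
- by move=> k; apply: mom_ind_ge0.
- by move=> a b; apply: mom_ind_sup.
- by apply: mom0.
Qed.

Lemma phi_mono L : incr EE (phi L).
Proof.
move=> B B' sB _; rewrite /phi (map_rt_mono _ sB).
apply: Mom_map.
- by move=> k; apply: mom_spin_ge0.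
- by move=> a b; apply: mom_spin_sup.
- by apply: mom0.
Qed.

Lemma rho_ratio e B B' : e \in EE -> B \subset B' -> B' \subset EE :\ e ->
  rho (e |: B) * rho B' <= rho (e |: B') * rho B.
Proof.
move=> eE sB sB'.
have eB' : e \notin B'.
  by apply/negP => /(fintype.subsetP sB'); rewrite !inE eqxx.
have eB : e \notin B by apply/negP => /(fintype.subsetP sB); apply/negP.
have e0 : (0 < #|e|)%N by move: eE; rewrite inE => /andP [h _]; apply: ltn_trans h.
have sB'E : B' \subset EE by apply: fintype.subset_trans sB' (subsetDl _ _).
have sBE : B \subset EE by apply: fintype.subset_trans sB sB'E.
rewrite /rho !cB_setU1 // !ZB_setU1 //.
set K := pA e * cB B * ZB R q B * cB B' * ZB R q B'.
have -> : pA e * cB B * (ZB R q B * dB B e) * (cB B' * ZB R q B') = K * dB B e by rewrite /K; ring.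
have -> : pA e * cB B' * (ZB R q B' * dB B' e) * (cB B * ZB R q B) = K * dB B' e by rewrite /K; ring.
apply: ler_wpM2l; last by apply: dB_mono.
by rewrite /K !mulr_ge0 // ltW // ?pA_pos ?cB_pos ?ZB_pos.
Qed.

Lemma expectE (X : config q n -> R) :
  @expect R q n J X = (\sum_(g : config q n) Zg J g * X g) / Zpart q J.
Proof.
rewrite /expect /Prob mulr_suml; apply: eq_bigr => g _; ring.
Qed.

Lemma main (Rl Sl : seq 'I_n) :
  0 <= @expect R q n J (fun g => @sigmaL R q n Rl g * @sigmaL R q n Sl g)
       - @expect R q n J (@sigmaL R q n Rl) * @expect R q n J (@sigmaL R q n Sl).
Proof.
have ecat : forall g : config q n, sigmaL R Rl g * sigmaL R Sl g = sigmaL R (Rl ++ Sl) g.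
  by move=> g; rewrite /sigmaL big_cat.
rewrite !expectE.
under eq_bigr do rewrite ecat.
rewrite !sum_Zg_sigma Zpart_eq.
have apos : 0 < \sum_(B in powerset EE) rho B by apply: sum_pos => B; apply: rho_pos.
set a := \sum_(B in powerset EE) rho B in apos *.
set X := \sum_(B in powerset EE) rho B * phi (Rl ++ Sl) B.
set Y := \sum_(B in powerset EE) rho B * phi Rl B.
set W := \sum_(B in powerset EE) rho B * phi Sl B.
have key : Y * W <= X * a.
  apply: le_trans (fkg rho_pos rho_ratio (phi_mono Rl) (phi_mono Sl)) _.
  apply: ler_wpM2r; first exact: ltW.
  apply: ler_sum => B; rewrite powersetE => sB.
  apply: ler_wpM2l; first by apply/ltW/rho_pos.
  rewrite /phi map_cat; apply: Mom_cat.
  - by move=> k; apply: mom_spin_ge0.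
  - by move=> c d; apply: mom_spin_sup.
have an : a != 0 by rewrite gt_eqF.
have -> : Y / a * (W / a) = (Y * W) / (a * a) by rewrite mulrACA invfM.
have -> : X / a = (X * a) / (a * a) by rewrite invfM mulrA mulfK.
rewrite subr_ge0; apply: ler_wpM2r => //.
by rewrite invr_ge0 mulr_ge0 // ltW.
Qed.

End Final.

Theorem theorem2 (R : realType) (q n : nat) (hq : (2 <= q)%N) (hn : (1 <= n)%N)
  (J : {set 'I_n} -> R) (hJ : forall A : {set 'I_n}, (1 < #|A|)%N -> 0 <= J A)
  (Rl Sl : seq 'I_n) :
  0 <= @expect R q n J (fun g => @sigmaL R q n Rl g * @sigmaL R q n Sl g)
       - @expect R q n J (@sigmaL R q n Rl) * @expect R q n J (@sigmaL R q n Sl).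
Proof.
have q0 : (0 < q)%N by apply: leq_trans hq.
exact: (main q0 hJ).
Qed.
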